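(* Consider the multicast coalitional game with player set $\mathcal{N}=\{1,\ldots,N\}$, $N\ge2$, and value function $$v(S)=\sum_{i\in S}U_i-\sum_{i\in S}\frac{\alpha_i}{R_S}-\frac{\beta+\gamma}{R_S},\qquad R_S=\min_{i\in S}R_i,$$ for nonempty $S\subseteq\mathcal{N}$. Suppose $P_{Rx,i}=P_{Rx}$ for all $i$, so that $\alpha_i=\alpha:=aP_{Rx}X$ for all $i$. Let $k\in\arg\min_{i\in\mathcal{N}}R_i$ and $j\in\arg\min_{i\in\mathcal{N}\setminus\{k\}}R_i$, and write $R_j=\lambda R_k$ with $\lambda\ge1$ (so $R_k$ and $R_j$ are the minimum and second minimum rates). If $$\lambda>1+\frac{\beta+\gamma}{\alpha(N-1)},$$ then the core is empty.
   Context: A transmitter multicasts a file of size $X>0$ bits to users $\mathcal{N}=\{1,\dots,N\}$. User $i$ has valuation $U_i\in\mathbb{R}$, downloads at rate $R_i>0$, and consumes receive power $P_{Rx,i}>0$; the transmitter transmits at power $P_{Tx}>0$. Costs per unit energy are $a>0$ at users and $b>0$ at the transmitter; bandwidth cost per second is $w>0$. Set $\alpha_i=aP_{Rx,i}X$, $\beta=bP_{Tx}X$, $\gamma=wX$. The core is the set of payoff vectors $(x_1,\dots,x_N)\in\mathbb{R}^N$ with $\sum_{i\in\mathcal{N}}x_i=v(\mathcal{N})$ and $\sum_{i\in S}x_i\ge v(S)$ for every nonempty $S\subseteq\mathcal{N}$. *)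

(* Defs.v *)
From mathcomp Require Import all_boot all_order all_algebra.
Set Implicit Arguments. Unset Strict Implicit. Unset Printing Implicit Defensive.
Import Order.TTheory GRing.Theory Num.Theory.
Local Open Scope ring_scope.

(* R_S = min_{i in S} Rate i  (meaningful for nonempty S). *)
Definition minRate (F : realFieldType) (N : nat) (Rate : 'I_N -> F)
    (S : {set 'I_N}) : F :=
  let s := [seq Rate i | i <- enum S] in foldr Num.min (head 0 s) s.

Definition mc_value (F : realFieldType) (N : nat) (U alpha Rate : 'I_N -> F)
    (beta gamma : F) (S : {set 'I_N}) : F :=
  \sum_(i in S) U i - \sum_(i in S) alpha i / minRate Rate S
  - (beta + gamma) / minRate Rate S.

Definition core (F : realFieldType) (N : nat) (v : {set 'I_N} -> F)
    (x : 'I_N -> F) : Prop :=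
  \sum_(i < N) x i = v [set: 'I_N] /\
  forall S : {set 'I_N}, S != set0 -> v S <= \sum_(i in S) x i.

(* Main.v *)
Require Import Defs.
From mathcomp Require Import all_boot all_order all_algebra.
From mathcomp Require Import ring lra.
Import Order.TTheory GRing.Theory Num.Theory.
Local Open Scope ring_scope.

Lemma foldr_min_ge (F : realFieldType) (m d : F) (s : seq F) :
  m <= d -> all (fun y => m <= y) s -> m <= foldr Num.min d s.
Proof.
move=> hd; elim: s => [|y s IH] //= /andP[hy hs].
by rewrite le_min hy IH.
Qed.

Lemma foldr_min_le (F : realFieldType) (x d : F) (s : seq F) :
  x \in s -> foldr Num.min d s <= x.
Proof.
elim: s => [|y s IH] //=; rewrite in_cons => /orP[/eqP->|hx].
  by rewrite ge_min lexx.
by rewrite ge_min IH ?orbT.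
Qed.

Lemma minRate_eq (F : realFieldType) (N : nat) (Rate : 'I_N -> F)
  (S : {set 'I_N}) (i0 : 'I_N) :
  i0 \in S -> (forall i, i \in S -> Rate i0 <= Rate i) ->
  minRate Rate S = Rate i0.
Proof.
move=> hi0 hmin; rewrite /minRate.
have hin : Rate i0 \in [seq Rate i | i <- enum S].
  by apply: map_f; rewrite mem_enum.
have hall : all (fun y => Rate i0 <= y) [seq Rate i | i <- enum S].
  by apply/allP => y /mapP[i]; rewrite mem_enum => hi ->; apply: hmin.
apply/eqP; rewrite eq_le foldr_min_le // foldr_min_ge //.
case: [seq Rate i | i <- enum S] hin hall => [|y s] //= _ /andP[] //.
Qed.

Theorem theorem5 (F : realFieldType) (N : nat) (hN : (2 <= N)%N)
    (X : F) (U Rate PRx : 'I_N -> F) (PTx a b w PRx0 : F)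
    (hX : 0 < X) (hRate : forall i, 0 < Rate i) (hPRx : forall i, 0 < PRx i)
    (hPTx : 0 < PTx) (ha : 0 < a) (hb : 0 < b) (hw : 0 < w)
    (hPRxc : forall i, PRx i = PRx0)
    (k j : 'I_N) (hk : forall i, Rate k <= Rate i)
    (hjk : j != k) (hj : forall i, i != k -> Rate j <= Rate i)
    (lambda : F) (hlam1 : 1 <= lambda) (hlam : Rate j = lambda * Rate k)
    (hcond : 1 + (b * PTx * X + w * X) / (a * PRx0 * X * (N - 1)%:R) < lambda) :
  ~ (exists x : 'I_N -> F,
        core (mc_value U (fun i => a * PRx i * X) Rate (b * PTx * X) (w * X)) x).
Proof.
move=> [x [hsum hS]].
set al := a * PRx0 * X. set B := b * PTx * X + w * X.
have hP0 : 0 < PRx0 by rewrite -(hPRxc k).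
have hal : 0 < al by rewrite /al !mulr_gt0.
have hB : 0 < B by rewrite /B addr_gt0 // !mulr_gt0.
have hc : 0 < (N - 1)%:R :> F by rewrite ltr0n subn_gt0.
have hRk := hRate k.
have hl0 : 0 < lambda by apply: lt_le_trans hlam1.
set C := ~: [set k].
have hCne : C != set0.
  by apply/set0Pn; exists j; rewrite /C in_setC in_set1.
have mT : minRate Rate [set: 'I_N] = Rate k.
  by apply: minRate_eq => [|i _]; rewrite ?in_setT.
have m1 : minRate Rate [set k] = Rate k.
  by apply: minRate_eq; rewrite ?in_set1 // => i; rewrite in_set1 => /eqP->.
have mC : minRate Rate C = Rate j.
  apply: minRate_eq; first by rewrite /C in_setC in_set1.
  by move=> i; rewrite /C in_setC in_set1 => /hj.
have cardC : #|C| = (N - 1)%N by rewrite /C cardsC1 card_ord subn1.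
have h1 := hS [set k] (introT (set0Pn _) (ex_intro _ k (set11 k))).
have h2 := hS C hCne.
move: hsum h1 h2; rewrite /mc_value mT m1 mC !big_set1.
have splitF (f : 'I_N -> F) : \sum_(i in [set: 'I_N]) f i = f k + \sum_(i in C) f i.
  rewrite (bigD1 k) ?in_setT //=; congr (_ + _); apply: eq_bigl => i.
  by rewrite /C in_setT in_setC in_set1.
have splitF' (f : 'I_N -> F) : \sum_(i < N) f i = f k + \sum_(i in C) f i.
  rewrite -splitF; apply: eq_bigl => i; by rewrite in_setT.
have hconst (S : {set 'I_N}) (R : F) :
  \sum_(i in S) (a * PRx i * X / R) = al / R *+ #|S|.
  by rewrite -sumr_const; apply: eq_bigr => i _; rewrite hPRxc.
rewrite splitF' (splitF U) (splitF (fun i => a * PRx i * X / Rate k)) /=.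
rewrite !hconst hPRxc -/al -/B cardC hlam => hsum h1 h2.
move: hsum h1 h2; rewrite -/al -/B.
set SU := \sum_(i in C) U i; set SX := \sum_(i in C) x i.
set c := ((N - 1)%:R : F).
set p := al / Rate k; set q := al / (lambda * Rate k).
set r := B / (lambda * Rate k); set t := B / Rate k.
rewrite -(mulr_natl p) -(mulr_natl q) -/c.
move=> hsum h1 h2.
have key0 : c * p - c * q - r <= 0.
  lra.
have key : c * al * lambda - c * al - B <= 0.
  have e : c * al * lambda - c * al - B = (lambda * Rate k) * (c * p - c * q - r).
    rewrite /p /q /r; field; rewrite ?mulf_neq0 ?gt_eqF //.
  by rewrite e; apply: mulr_ge0_le0; first by rewrite mulr_ge0 ?ltW.
move: hcond; rewrite -ltrBrDl ltr_pdivrMr ?mulr_gt0 // -/B -/al -/c => hc2.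
have e2 : (lambda - 1) * (al * c) = c * al * lambda - c * al by ring.
move: hc2; rewrite e2; lra.
Qed.
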